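(* Let $T$ be a finite semi-simplicial triangulation of a compact surface, possibly with boundary, and let $\Delta: E(T) \to \mathbb{R}$ satisfy: (1) $\Delta(e) > 0$ for all $e \in E(T)$; (2) for every set of faces $\mathcal{F} \subseteq F(T)$, writing $E(\mathcal{F})$ for the set of edges incident to some face in $\mathcal{F}$, $\sum_{e \in E(\mathcal{F})} \Delta(e) \ge \pi |\mathcal{F}|$, with equality if and only if $\mathcal{F} = F(T)$ or $E(\mathcal{F}) = \emptyset$. Consider the linear program in real variables $u_t$ ($t \in F(T)$), $v_e$ ($e \in E(T)$): maximize $$F(\mathbf{u},\mathbf{v}) = \pi \sum_{t \in F(T)} u_t + \sum_{e \in E(T)} \Delta(e) v_e$$ subject to $u_t + v_e \le 0$ whenever $e$ is an edge of $t$, and $$3\sum_{t \in F(T)} u_t + 2\sum_{e \in E(T),\, e \notin \partial T} v_e + \sum_{e \in E(T),\, e \in \partial T} v_e \le -1 .$$ Then the optimal value of the objective of this program is strictly negative.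
   Context: A semi-simplicial triangulation is one in which distinct closed cells may intersect in a collection of lower-dimensional cells; $E(T)$, $F(T)$ denote edges and faces of $T$, and $e \in \partial T$ means $e$ is a boundary edge (incident to only one face). *)

(* Defs.v *)
From HB Require Import structures.
From mathcomp Require Import all_boot all_order all_algebra.
From mathcomp Require Import reals trigo.
Set Implicit Arguments. Unset Strict Implicit. Unset Printing Implicit Defensive.
Import Order.TTheory GRing.Theory Num.Theory.
Local Open Scope ring_scope.

(* A finite semi-simplicial triangulation is described combinatorially by its
   finite set of faces F, finite set of edges E, and the map [side t i] giving
   the i-th side (i < 3) of the triangular face t.  Sides are counted with
   multiplicity (a semi-simplicial face may have two sides glued to the same edge). *)

Definition ninc (F E : finType) (side : F -> 'I_3 -> E) (e : E) : nat :=
  #|[set p : F * 'I_3 | side p.1 p.2 == e]|.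

Definition is_boundary (F E : finType) (side : F -> 'I_3 -> E) (e : E) : bool :=
  ninc side e == 1%N.

Definition surface_triangulation (F E : finType) (side : F -> 'I_3 -> E) : Prop :=
  (0 < #|F|)%N /\ forall e : E, ninc side e = 1%N \/ ninc side e = 2%N.

Definition edges_of (F E : finType) (side : F -> 'I_3 -> E) (A : {set F}) : {set E} :=
  [set e | [exists t in A, exists i : 'I_3, side t i == e]].

Definition admissible_angles (R : realType) (F E : finType) (side : F -> 'I_3 -> E)
    (Delta : E -> R) : Prop :=
  (forall e, 0 < Delta e) /\
  (forall A : {set F},
     pi * (#|A|%:R) <= \sum_(e in edges_of side A) Delta e /\
     (\sum_(e in edges_of side A) Delta e = pi * (#|A|%:R) <->
        A = setT \/ edges_of side A = set0)).

Definition lp_feasible (R : realType) (F E : finType) (side : F -> 'I_3 -> E)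
    (u : F -> R) (v : E -> R) : Prop :=
  (forall (t : F) (i : 'I_3), u t + v (side t i) <= 0) /\
  3%:R * (\sum_(t : F) u t)
    + 2%:R * (\sum_(e : E | ~~ is_boundary side e) v e)
    + \sum_(e : E | is_boundary side e) v e <= -1.

Definition lp_objective (R : realType) (F E : finType) (Delta : E -> R)
    (u : F -> R) (v : E -> R) : R :=
  pi * (\sum_(t : F) u t) + \sum_(e : E) Delta e * v e.

(* Main.v *)
Require Import Defs.
From HB Require Import structures.
From mathcomp Require Import all_boot all_order all_algebra.
From mathcomp Require Import reals trigo ring lra.
Import Order.TTheory GRing.Theory Num.Theory.
Local Open Scope ring_scope.

Section Aux.
Variables (R : realType) (F E : finType) (side : F -> 'I_3 -> E) (Delta : E -> R).

Definition Ksum (u : F -> R) (v : E -> R) : R :=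
  \sum_(p : F * 'I_3) (u p.1 + v (side p.1 p.2)).

Definition Phi (rho : R) (u : F -> R) (v : E -> R) : R :=
  lp_objective Delta u v + rho * Ksum u v.

Lemma sum_side (f : E -> R) :
  \sum_(p : F * 'I_3) f (side p.1 p.2) = \sum_e (ninc side e)%:R * f e.
Proof.
rewrite (partition_big (fun p : F * 'I_3 => side p.1 p.2) xpredT) //=.
apply: eq_bigr => e _.
rewrite (eq_bigr (fun _ => f e)); last by move=> p /eqP ->.
rewrite sumr_const /ninc mulrC mulr_natr; congr (_ *+ _).
by apply: eq_card => p; rewrite !inE.
Qed.

Lemma mem_edges (A : {set F}) t i : t \in A -> side t i \in edges_of side A.
Proof.
move=> Ht; rewrite inE; apply/existsP; exists t; rewrite Ht /=.
by apply/existsP; exists i.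
Qed.

Lemma Phi_lin rho u v u1 v1 u2 v2 d :
  (forall t, u t = u1 t + d * u2 t) -> (forall e, v e = v1 e + d * v2 e) ->
  Phi rho u v = Phi rho u1 v1 + d * Phi rho u2 v2.
Proof.
move=> hu hv; rewrite /Phi /lp_objective /Ksum.
rewrite (eq_bigr _ (fun t _ => hu t)) (eq_bigr _ (fun e _ => congr1 (fun x => Delta e * x) (hv e))).
rewrite (eq_bigr (fun p : F * 'I_3 => (u1 p.1 + v1 (side p.1 p.2)) + d * (u2 p.1 + v2 (side p.1 p.2)))); last first.
  by move=> p _; rewrite hu hv; ring.
rewrite (eq_bigr (fun e => Delta e * v1 e + d * (Delta e * v2 e))); last by move=> e _; ring.
rewrite !big_split /= -!mulr_sumr.
rewrite big_split /=; ring.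
Qed.


Definition genu (c : ({set F} + E)%type) (t : F) : R :=
  match c with inl A => - (t \in A)%:R | inr _ => 0 end.
Definition genv (c : ({set F} + E)%type) (e : E) : R :=
  match c with inl A => (e \notin edges_of side (~: A))%:R | inr e0 => - (e == e0)%:R end.
Definition key c := - Ksum (genu c) (genv c).

Lemma gen_feas c t i : genu c t + genv c (side t i) <= 0.
Proof.
case: c => [A|e0] /=.
  have [tS|tS] := boolP (t \in A).
    by case: (_ \notin _); rewrite ?addNr ?addr0 ?oppr_le0.
  by rewrite (@mem_edges (~: A) t i) ?inE //= ?(negbTE tS) oppr0 add0r.
by rewrite add0r oppr_le0.
Qed.

Lemma key_ge0 c : 0 <= key c.
Proof. by rewrite /key oppr_ge0 /Ksum; apply: sumr_le0 => p _; apply: gen_feas. Qed.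

Lemma incident (hs : surface_triangulation side) e : exists p : F * 'I_3, side p.1 p.2 = e.
Proof.
case: hs => _ /(_ e) h.
have : (0 < ninc side e)%N by case: h => ->.
rewrite /ninc card_gt0 => /set0Pn [p]; rewrite inE => /eqP <-; by exists p.
Qed.

Lemma constraint_eq (hs : surface_triangulation side) u v :
  3%:R * (\sum_(t : F) u t)
    + 2%:R * (\sum_(e : E | ~~ is_boundary side e) v e)
    + \sum_(e : E | is_boundary side e) v e = Ksum u v.
Proof.
rewrite /Ksum big_split /= sum_side.
rewrite -(pair_big xpredT xpredT (fun t (i : 'I_3) => u t)) /=.
rewrite [X in _ = X + _](eq_bigr (fun t => 3%:R * u t)); last first.
  by move=> t _; rewrite sumr_const card_ord mulr_natl.
rewrite -mulr_sumr [X in _ = _ + X](bigID (fun e => is_boundary side e)) /= addrC addrA.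
congr (_ + _ + _).
  rewrite mulr_sumr; apply: eq_bigr => e; rewrite /is_boundary.
  by case: hs => _ /(_ e) [->|->].
by apply: eq_bigr => e /eqP ->; rewrite mul1r.
Qed.

Lemma edges_all (hs : surface_triangulation side) : edges_of side setT = setT.
Proof.
apply/setP => e; rewrite [RHS]inE; have [p <-] := incident hs e.
by apply: (@mem_edges setT p.1 p.2); rewrite inE.
Qed.

Lemma sumDelta (hs : surface_triangulation side) (ha : admissible_angles side Delta) :
  \sum_e Delta e = pi * #|F|%:R.
Proof.
case: ha => _ /(_ setT) [_ [_ h]]; have := h (or_introl erefl).
rewrite edges_all // cardsT => <-.
by apply: eq_bigl => e; rewrite inE.
Qed.

Lemma objS (hs : surface_triangulation side) (ha : admissible_angles side Delta) A :
  lp_objective Delta (genu (inl A)) (genv (inl A)) =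
  pi * #|~: A|%:R - \sum_(e in edges_of side (~: A)) Delta e.
Proof.
rewrite /lp_objective /= sumrN.
rewrite (eq_bigr (fun t => if t \in A then 1 else 0)); last by move=> t _; case: (t \in A).
rewrite -big_mkcond sumr_const.
rewrite (eq_bigr (fun e => if e \notin edges_of side (~: A) then Delta e else 0)); last first.
  by move=> e _; case: (_ \notin _); rewrite ?mulr1 ?mulr0.
rewrite -big_mkcond /=.
have := sumDelta hs ha; rewrite (bigID (fun e => e \in edges_of side (~: A))) /= => hsum.
have hc := cardsC A.
have -> : (#|~: A|%:R : R) = #|F|%:R - #|A|%:R by rewrite -hc natrD; ring.
rewrite mulrBr -hsum; ring.
Qed.

Lemma objS_le0 (hs : surface_triangulation side) (ha : admissible_angles side Delta) A :
  lp_objective Delta (genu (inl A)) (genv (inl A)) <= 0.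
Proof.
rewrite objS // subr_le0; case: ha => _ /(_ (~: A)) [-> _] //.
Qed.

Lemma objS_eq0 (hs : surface_triangulation side) (ha : admissible_angles side Delta) A :
  lp_objective Delta (genu (inl A)) (genv (inl A)) = 0 -> key (inl A) = 0.
Proof.
rewrite objS // => /eqP; rewrite subr_eq0 => /eqP h.
case: ha => _ /(_ (~: A)) [_ [hiff _]].
have := hiff (esym h) => hor.
rewrite /key /Ksum big1 ?oppr0 // => p _ /=.
case: hor => [hT|h0].
  have hp : p.1 \in ~: A by rewrite hT inE.
  rewrite (@mem_edges (~: A) p.1 p.2 hp) /=.
  by move: hp; rewrite inE => /negbTE ->; rewrite oppr0 addr0.
have hp : p.1 \in A.
  apply/negPn/negP => hn.
  have := @mem_edges (~: A) p.1 p.2; rewrite inE h0 inE => /(_ hn) //.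
by rewrite hp h0 inE /= addNr.
Qed.

Lemma obj_edge e0 : lp_objective Delta (genu (inr e0)) (genv (inr e0)) = - Delta e0.
Proof.
rewrite /lp_objective /= big1 ?mulr0 ?add0r //.
rewrite (bigD1 e0) //= eqxx mulrN1 big1 ?addr0 // => e /negbTE ->.
by rewrite oppr0 mulr0.
Qed.

Lemma key_edge e0 : key (inr e0) = (ninc side e0)%:R.
Proof.
rewrite /key /Ksum /=.
rewrite (eq_bigr (fun p : F * 'I_3 => - (side p.1 p.2 == e0)%:R)); last by move=> p _; rewrite add0r.
rewrite sumrN opprK (sum_side (fun e => (e == e0)%:R)) (bigD1 e0) //= eqxx mulr1 big1 ?addr0 // => e /negbTE ->.
by rewrite mulr0.
Qed.

Lemma base_case (hs : surface_triangulation side) (ha : admissible_angles side Delta)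
  rho (hE : forall e, 0 <= Delta e + rho * (ninc side e)%:R) u v mu :
  (forall t, u t = mu) -> (forall t i, u t + v (side t i) <= 0) -> Phi rho u v <= 0.
Proof.
move=> hu hv.
rewrite (@Phi_lin rho u v (fun _ => mu) (fun _ => - mu) (fun _ => 0) (fun e => v e + mu) 1);
  last 2 first.
- by move=> t; rewrite hu; ring.
- by move=> e; ring.
have -> : Phi rho (fun _ => mu) (fun _ => -mu) = 0.
  rewrite /Phi /lp_objective [Ksum _ _]big1; last by move=> p _; rewrite addrN.
  rewrite (eq_bigr (fun e => - mu * Delta e)); last by move=> e _; ring.
  rewrite -mulr_sumr sumDelta // sumr_const -mulr_natr; ring.
rewrite add0r mul1r /Phi /lp_objective big1 // mulr0 add0r /Ksum.
rewrite (eq_bigr (fun p : F * 'I_3 => v (side p.1 p.2) + mu)); last by move=> p _; rewrite add0r.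
rewrite (sum_side (fun e => v e + mu)) mulr_sumr -big_split /=.
apply: sumr_le0 => e _.
rewrite mulrA -mulrDl; apply: mulr_ge0_le0 => //.
have [p <-] := incident hs e.
by have := hv p.1 p.2; rewrite hu addrC.
Qed.

Lemma all_eq (u : F -> R) mu : (forall t, mu <= u t) -> [set t | mu < u t] = set0 ->
  forall t, u t = mu.
Proof.
move=> hmu h0 t.
have : t \notin [set t | mu < u t] by rewrite h0 inE.
rewrite inE => hlt; apply/eqP; rewrite eq_le (hmu t) andbT.
by rewrite leNgt.
Qed.

Lemma main_ind (hs : surface_triangulation side) (ha : admissible_angles side Delta) rho
  (hS : forall A, Phi rho (genu (inl A)) (genv (inl A)) <= 0)
  (hE : forall e, 0 <= Delta e + rho * (ninc side e)%:R) :
  forall (n : nat) (u : F -> R) (v : E -> R) (mu : R), (forall t, mu <= u t) -> (#|[set t | (mu < u t)%R]| <= n)%N ->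
  (forall t i, u t + v (side t i) <= 0) -> Phi rho u v <= 0.
Proof.
elim=> [|n IH] u v mu hmu hn hv.
  apply: (@base_case hs ha rho hE u v mu) => //; apply: all_eq => //.
  by apply/eqP; rewrite -cards_eq0 -leqn0.
case: (set_0Vmem [set t | mu < u t]) => [h0 | [t1 ht1]].
  by apply: (@base_case hs ha rho hE u v mu) => //; apply: all_eq.
set A := [set t | mu < u t] in hn ht1 *.
case: (arg_minP u ht1) => t2 ht2 hmin.
have ht2' : t2 \in A by [].
have hmin' : forall j, j \in A -> u t2 <= u j by [].
clear ht2 hmin.
have hAm : forall t, t \in A -> mu < u t by move=> t; rewrite inE.
have hSm : forall t, t \in ~: A -> u t = mu.
  move=> t; rewrite inE => hn'; apply/eqP; rewrite eq_le hmu andbT leNgt.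
  by apply: contra hn'; rewrite inE.
have dpos : 0 < u t2 - mu by rewrite subr_gt0; apply: hAm.
set d := u t2 - mu in dpos.
pose u' t := u t + d * (t \in ~: A)%:R.
pose v' e := v e - d * (e \notin edges_of side (~: ~: A))%:R.
rewrite (@Phi_lin rho u v u' v' (genu (inl (~: A))) (genv (inl (~: A))) d); last 2 first.
- by move=> t; rewrite /u' /=; ring.
- by move=> e; rewrite /v' /=; ring.
have h2 := hS (~: A).
suff h1 : Phi rho u' v' <= 0.
  by rewrite -(addr0 0) lerD // mulr_ge0_le0 // ltW.
apply: (IH u' v' (u t2)).
- move=> t; rewrite /u'; case: (boolP (t \in ~: A)) => tS.
    by rewrite mulr1n mulr1 (hSm t tS) /d; lra.
  have tA : t \in A by move: tS; rewrite in_setC negbK.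
  by rewrite mulr0n mulr0 addr0 hmin'.
- have sub : [set t | u t2 < u' t] \subset A :\ t2.
    apply/subsetP => t; rewrite inE /u'.
    case: (boolP (t \in ~: A)) => tS.
      by rewrite mulr1n mulr1 (hSm t tS) /d; lra.
    have tA : t \in A by move: tS; rewrite in_setC negbK.
    rewrite mulr0n mulr0 addr0 => hlt; rewrite !inE (hAm t tA) andbT.
    by apply/eqP => ht; move: hlt; rewrite ht ltxx.
  apply: leq_trans (subset_leq_card sub) _.
  by move: hn; rewrite (cardsD1 t2 A) ht2' add1n ltnS.
- move=> t i; rewrite /u' /v'.
  case: (boolP (t \in ~: A)) => tS.
    have hut := hSm t tS.
    case: (boolP (side t i \in edges_of side (~: ~: A))) => he.
      move: (he); rewrite setCK inE => /existsP [t' /andP [t'A /existsP [i' /eqP hei]]].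
      have h3 := hv t' i'; rewrite hei in h3.
      have h4 := hmin' t' t'A.
      rewrite /= mulr1n mulr0n mulr1 mulr0 subr0 hut /d; lra.
    have h3 := hv t i.
    rewrite /= !mulr1n !mulr1; lra.
  have tA : t \in ~: ~: A by rewrite setCK; move: tS; rewrite in_setC negbK.
  rewrite (@mem_edges (~: ~: A) t i tA) /= !mulr0n !mulr0 addr0 subr0.
  exact: hv.
Qed.

Lemma obj_scale k (u : F -> R) (v : E -> R) :
  lp_objective Delta (fun t => k * u t) (fun e => k * v e) = k * lp_objective Delta u v.
Proof.
rewrite /lp_objective -mulr_sumr.
rewrite (eq_bigr (fun e => k * (Delta e * v e))); last by move=> e _; ring.
rewrite -mulr_sumr; ring.
Qed.

Lemma Ksum_scale k (u : F -> R) (v : E -> R) :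
  Ksum (fun t => k * u t) (fun e => k * v e) = k * Ksum u v.
Proof.
rewrite /Ksum mulr_sumr; apply: eq_bigr => p _ /=; ring.
Qed.
End Aux.

Theorem theorem3p4 (R : realType) (F E : finType) (side : F -> 'I_3 -> E)
    (Delta : E -> R) :
  surface_triangulation side ->
  admissible_angles side Delta ->
  exists (u : F -> R) (v : E -> R),
    [/\ lp_feasible side u v,
        lp_objective Delta u v < 0 &
        forall (u' : F -> R) (v' : E -> R),
          lp_feasible side u' v' -> lp_objective Delta u' v' <= lp_objective Delta u v].
Proof.
move=> hs ha.
have [t0 _] : exists t0 : F, true.
  case: (pickP (T:=F) xpredT) => [t0 _|h0]; first by exists t0.
  by case: hs; rewrite (eq_card0 h0).
pose e0 := side t0 ord0.
pose kk c := @key R F E side c.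
pose gu c := @genu R F E c.
pose gv c := @genv R F E side c.
pose ratio c := lp_objective Delta (gu c) (gv c) / kk c.
have hk0 : 0 < kk (inr e0).
  rewrite /kk key_edge ltr0n.
  by case: hs => _ /(_ e0) [->|->].
case: (@arg_maxP _ _ _ (inr e0) (fun c => 0 < kk c) ratio hk0) => cs hcs hmax.
have hcs' : 0 < kk cs by [].
have hmax' : forall c, 0 < kk c -> ratio c <= ratio cs by [].
clear hcs hmax.
set rho := ratio cs.
have obj_le0 : forall c, lp_objective Delta (gu c) (gv c) <= 0.
  case=> [A|e]; first exact: (@objS_le0 R F E side Delta hs ha A).
  by rewrite /gu /gv obj_edge oppr_le0 ltW //; case: ha.
have obj_lt0 : lp_objective Delta (gu cs) (gv cs) < 0.
  rewrite lt_def obj_le0 andbT; apply/eqP => h0.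
  move: hcs' h0; case Ecs: cs => [A|e] hk h0.
    by move: hk; rewrite /kk (@objS_eq0 R F E side Delta hs ha A (esym h0)) ltxx.
  move: (esym h0); rewrite /gu /gv obj_edge => /eqP; rewrite oppr_eq0 => /eqP he.
  by case: ha => /(_ e); rewrite he ltxx.
have rho_lt0 : rho < 0.
  by rewrite /rho /ratio ltr_pdivrMr // mul0r.
have hgen : forall c, Phi R F E side Delta rho (gu c) (gv c) <= 0.
  move=> c; rewrite /Phi.
  have hK : Ksum R F E side (gu c) (gv c) = - kk c by rewrite /kk /key opprK.
  rewrite hK; have := @key_ge0 R F E side c; rewrite -/(kk c) le0r => /orP [/eqP ->|hkc].
    by rewrite oppr0 mulr0 addr0.
  have := hmax' c hkc; rewrite /ratio ler_pdivrMr // => h.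
  rewrite mulrN subr_le0; exact: h.
have hE : forall e, 0 <= Delta e + rho * (ninc side e)%:R.
  move=> e; have := hgen (inr e); rewrite /Phi /gu /gv obj_edge.
  have -> : Ksum R F E side (genu R F E (inr e)) (genv R F E side (inr e)) = - (ninc side e)%:R.
    by rewrite -key_edge /key opprK.
  by rewrite mulrN -opprD oppr_le0.
pose k := (kk cs)^-1.
have kpos : 0 < k by rewrite /k invr_gt0.
exists (fun t => k * gu cs t), (fun e => k * gv cs e).
have hobj : lp_objective Delta (fun t => k * gu cs t) (fun e => k * gv cs e) = rho.
  by rewrite obj_scale /rho /ratio /k mulrC.
rewrite hobj; split => //.
  split.
    move=> t i; rewrite -mulrDr; apply: mulr_ge0_le0; first exact: ltW.
    exact: gen_feas.
  rewrite constraint_eq // Ksum_scale.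
  have -> : Ksum R F E side (gu cs) (gv cs) = - kk cs by rewrite /kk /key opprK.
  by rewrite /k mulrN mulVf // gt_eqF.
move=> u' v' [hside hK].
rewrite constraint_eq // in hK.
case: (@arg_minP _ _ F t0 xpredT u' erefl) => tm _ hm.
have hPhi := @main_ind R F E side Delta hs ha rho (fun A => hgen (inl A)) hE #|F| u' v' (u' tm)
  (fun t => hm t erefl) (max_card _) hside.
move: hPhi; rewrite /Phi => hPhi.
nra.
Qed.
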